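(* Let $G$ be a directed graph on $n$ vertices and let $u,v,x$ be vertices of $G$ such that the arc $\overrightarrow{uv}$ is not in $G$. Assume that adding the arc $\overrightarrow{uv}$ to $G$ decreases the cost of $u$ by $s$, where $s>n\operatorname{dist}(x,u)$. Then adding the arc $\overrightarrow{xv}$ to $G$ decreases the cost of $x$ by at least $s-n\operatorname{dist}(x,u)$.
   Context: For a directed graph $G$ on $n$ vertices, $U(G)$ is the undirected multigraph obtained by ignoring arc directions, and $\operatorname{dist}(a,b)$ is the distance between $a$ and $b$ in $U(G)$, defined to be $n^2$ if $a$ and $b$ lie in different connected components. The cost of a vertex $a$ is $c(a)=\sum_{w}\operatorname{dist}(a,w)$ (sum over all vertices $w$ of $G$). *)

(* Defs.v *)
From mathcomp Require Import all_boot all_order all_algebra.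
Set Implicit Arguments. Unset Strict Implicit. Unset Printing Implicit Defensive.

Definition digraph (n : nat) := rel 'I_n.

Definition adjU n (G : digraph n) : rel 'I_n := fun a b => G a b || G b a.

Definition has_walk n (G : digraph n) (k : nat) (a b : 'I_n) : bool :=
  [exists p : k.-tuple 'I_n, path (adjU G) a p && (last a p == b)].

(* Distance in U(G): the least k with a walk of length k (a shortest walk
   has at most n-1 edges, so searching k < n suffices); n^2 if none,
   i.e. if a and b lie in different components. *)
Definition dist n (G : digraph n) (a b : 'I_n) : nat :=
  if [seq k <- iota 0 n | has_walk G k a b] is k :: _ then k else n ^ 2.

Definition cost n (G : digraph n) (a : 'I_n) : nat := \sum_(w : 'I_n) dist G a w.

Definition add_arc n (G : digraph n) (a b : 'I_n) : digraph n :=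
  fun x y => G x y || ((x == a) && (y == b)).

(* Main.v *)
Require Import Defs.
From mathcomp Require Import all_boot all_order all_algebra.
From mathcomp Require Import zify.
Import GRing.Theory Num.Theory.
Set Implicit Arguments. Unset Strict Implicit. Unset Printing Implicit Defensive.

Section D.
Variables (n : nat) (G : digraph n).

Lemma has_walkP k a b : reflect (exists p : seq 'I_n, [/\ size p = k, path (adjU G) a p & last a p = b]) (has_walk G k a b).
Proof.
apply: (iffP existsP) => [[t /andP[Hp /eqP Hl]]| [p [Hs Hp Hl]]].
  by exists (val t); rewrite size_tuple.
have Hs' : size p == k by apply/eqP.
by exists (Tuple Hs'); rewrite /= Hp Hl eqxx.
Qed.

Lemma head_filter_iota (P : pred nat) r m j : m <= j < m + r -> P j ->
  exists2 k, [seq i <- iota m r | P i] = k :: behead [seq i <- iota m r | P i] & k <= j.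
Proof.
elim: r m => [|r IH] m; first by lia.
move=> Hj Pj /=; case: ifP => Pm; first by exists m => //; lia.
have Hmj : m != j by apply/eqP => E; rewrite E Pj in Pm.
by apply: IH => //; lia.
Qed.

Lemma dist_spec a b : dist G a b = n ^ 2 \/ (dist G a b < n /\ has_walk G (dist G a b) a b).
Proof.
rewrite /dist; case E: [seq k <- iota 0 n | has_walk G k a b] => [|k l]; first by left.
right; have : k \in [seq k <- iota 0 n | has_walk G k a b] by rewrite E mem_head.
by rewrite mem_filter mem_iota /= add0n => /andP[-> ->].
Qed.

Lemma dist_le_n2 a b : dist G a b <= n ^ 2.
Proof. case: (dist_spec a b) => [->|[H _]] //. rewrite expnS expn1. destruct n => //; nia. Qed.

Lemma dist_le_walk k a b : has_walk G k a b -> dist G a b <= k.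
Proof.
move=> /has_walkP [p [Hs Hp Hl]].
have Hss : size (shorten a p) <= size p.
  elim: p a {Hs Hp Hl} => [|y p IH] x //=; case: ifP => _.
    by apply: leq_trans (IH x) _.
  by rewrite ltnS.
move: Hss Hl; case: (shortenP Hp) => p' Hp' Hu _ Hsp Hl.
have Hsz : size (a :: p') <= n.
  by move/card_uniqP: Hu => <-; rewrite -[n in _ <= n]card_ord max_card.
have Hw : has_walk G (size p') a b by apply/has_walkP; exists p'.
have Hr : 0 <= size p' < 0 + n by rewrite /= in Hsz; rewrite add0n Hsz.
rewrite /dist; have [k0 -> Hk0] := @head_filter_iota (fun j => has_walk G j a b) n 0 (size p') Hr Hw.
by apply: leq_trans Hk0 _; rewrite -Hs.
Qed.

Lemma adjU_sym a b : adjU G a b = adjU G b a.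
Proof. by rewrite /adjU orbC. Qed.

Lemma dist_sym_le a b : dist G b a <= dist G a b.
Proof.
case: (dist_spec a b) => [->|[_ /has_walkP [p [Hs Hp Hl]]]]; first exact: dist_le_n2.
apply: dist_le_walk; apply/has_walkP; exists (rev (belast a p)); split.
- by rewrite size_rev size_belast.
- rewrite -Hl rev_path; apply: sub_path Hp => y z; by rewrite adjU_sym.
- case: p {Hs Hp} Hl => [/= <-|y p _] //=.
  by rewrite rev_cons last_rcons.
Qed.

Lemma dist_sym a b : dist G a b = dist G b a.
Proof. by apply/eqP; rewrite eqn_leq !dist_sym_le. Qed.

Lemma dist_tri a b c : dist G a c <= dist G a b + dist G b c.
Proof.
case: (dist_spec a b) => [->|[_ /has_walkP [p [Hs Hp Hl]]]].
  by apply: leq_trans (dist_le_n2 _ _) (leq_addr _ _).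
case: (dist_spec b c) => [->|[_ /has_walkP [q [Hs' Hq Hl']]]].
  by apply: leq_trans (dist_le_n2 _ _) (leq_addl _ _).
apply: dist_le_walk; apply/has_walkP; exists (p ++ q); split.
- by rewrite size_cat Hs Hs'.
- by rewrite cat_path Hp Hl Hq.
- by rewrite last_cat Hl.
Qed.
End D.

Lemma dist_mono n (G H : digraph n) a b : (forall x y, G x y -> H x y) -> dist H a b <= dist G a b.
Proof.
move=> GH; case: (dist_spec G a b) => [->|[_ /has_walkP [p [Hs Hp Hl]]]]; first exact: dist_le_n2.
apply: dist_le_walk; apply/has_walkP; exists p; split => //.
by apply: sub_path Hp => y z; rewrite /adjU => /orP[/GH -> | /GH ->] //; rewrite orbT.
Qed.

Lemma dist_add_le n (G : digraph n) x v w : dist (add_arc G x v) x w <= (dist G v w).+1.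
Proof.
case: (dist_spec G v w) => [->|[_ /has_walkP [p [Hs Hp Hl]]]].
  exact: leq_trans (dist_le_n2 _ _ _) (leqnSn _).
apply: dist_le_walk; apply/has_walkP; exists (v :: p); split => /=.
- by rewrite Hs.
- rewrite {1}/adjU /add_arc !eqxx /= orbT /=.
  by apply: sub_path Hp => y z; rewrite /adjU /add_arc => /orP[->|->]; rewrite ?orbT.
- exact: Hl.
Qed.

Lemma walk_decomp n (G : digraph n) u v p a :
  path (adjU (add_arc G u v)) a p ->
  has_walk G (size p) a (last a p) \/
  exists2 j, j < size p & (has_walk G j u (last a p) || has_walk G j v (last a p)).
Proof.
elim: p a => [|b p IH] a /=.
  by move=> _; left; apply/has_walkP; exists [::].
move=> /andP[Hab Hp]; case: (IH b Hp) => [Hw|[j Hj Hj']].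
  case Hg: (adjU G a b).
    left; move/has_walkP: Hw => [q [Hs Hq Hl]]; apply/has_walkP; exists (b :: q).
    by rewrite /= Hs Hg Hq Hl.
  right; exists (size p) => //.
  move: Hab; rewrite /adjU /add_arc; move: Hg; rewrite /adjU => /norP[/negbTE -> /negbTE ->] /=.
  by move=> /orP[/andP[_ /eqP <-]|/andP[/eqP <- _]]; rewrite Hw ?orbT.
by right; exists j => //; apply: ltnW.
Qed.

Lemma dist_add_ge n (G : digraph n) u v w :
  dist (add_arc G u v) u w < dist G u w -> (dist G v w).+1 <= dist (add_arc G u v) u w.
Proof.
move=> Hlt.
case: (dist_spec (add_arc G u v) u w) => [E|[_ /has_walkP [p [Hs Hp Hl]]]].
  by have := dist_le_n2 G u w; rewrite E in Hlt; lia.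
case: (walk_decomp Hp) => [Hw|[j Hj /orP[Hu|Hv]]].
- by have := dist_le_walk Hw; rewrite Hs Hl; lia.
- by have := dist_le_walk Hu; rewrite Hl; lia.
- by have := dist_le_walk Hv; rewrite Hl; lia.
Qed.

Lemma pointwise n (G : digraph n) u v x w :
  dist G u w + dist (add_arc G x v) x w <= dist G x w + dist (add_arc G u v) u w + dist G x u.
Proof.
have m1 : dist (add_arc G x v) x w <= dist G x w by apply: dist_mono => a b H; rewrite /add_arc H.
have m2 : dist (add_arc G u v) u w <= dist G u w by apply: dist_mono => a b H; rewrite /add_arc H.
have e1 := dist_add_le G x v w.
have t1 := dist_tri G u x w. rewrite (dist_sym G u x) in t1.
case: (ltnP (dist (add_arc G u v) u w) (dist G u w)) => H.
  have := dist_add_ge H; lia.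
lia.
Qed.

Local Open Scope ring_scope.

Theorem mainTheorem16 (n : nat) (G : digraph n) (u v x : 'I_n) (s : int) :
  ~~ G u v ->
  (cost G u)%:Z - (cost (add_arc G u v) u)%:Z = s ->
  s > (n * dist G x u)%N%:Z ->
  (cost G x)%:Z - (cost (add_arc G x v) x)%:Z >= s - (n * dist G x u)%N%:Z.
Proof.
move=> _ Hs _.
have Hsum : (cost G u + cost (add_arc G x v) x <= cost G x + cost (add_arc G u v) u + n * dist G x u)%N.
  rewrite /cost -!big_split /=.
  have -> : (n * dist G x u = \sum_(w : 'I_n) dist G x u)%N by rewrite sum_nat_const card_ord.
  rewrite -big_split /=; apply: leq_sum => w _; exact: pointwise.
rewrite -Hs; lia.
Qed.
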